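(* Let $R$ be a ring and $a\in R$ an element which is not nilpotent. Then there exists a prime ideal $I$ of $R$ such that $a+I$ is a minimal non-nilpotent element of the factor ring $R/I$.
   Context: All rings are associative with unit; ''ideal'' means two-sided ideal. For an ideal $J$ of a ring $S$, an element $b\in S$ is nilpotent modulo $J$ if $b^n\in J$ for some $n\in\mathbb N$. An element $b$ of a ring $S$ is minimal non-nilpotent if $b$ is not nilpotent and $b$ is nilpotent modulo $J$ for every non-zero ideal $J$ of $S$. *)

(* Defs.v *)
From HB Require Import structures.
From mathcomp Require Import all_boot all_order all_algebra.
Set Implicit Arguments. Unset Strict Implicit. Unset Printing Implicit Defensive.
Import GRing.Theory.
Local Open Scope ring_scope.

Definition is_ideal (R : nzRingType) (I : R -> Prop) : Prop :=
  [/\ I 0,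
      (forall x y, I x -> I y -> I (x + y)),
      (forall x, I x -> I (- x)),
      (forall r x, I x -> I (r * x)) &
      (forall r x, I x -> I (x * r))].

(* Prime ideal (non-commutative sense): I <> R, and for ideals A, B,
   AB ⊆ I implies A ⊆ I or B ⊆ I.  (AB ⊆ I iff all products x*y with
   x in A, y in B lie in I, since I is an ideal.) *)
Definition prime_ideal (R : nzRingType) (I : R -> Prop) : Prop :=
  [/\ is_ideal I,
      (exists x, ~ I x) &
      (forall A B : R -> Prop, is_ideal A -> is_ideal B ->
         (forall x y, A x -> B y -> I (x * y)) ->
         (forall x, A x -> I x) \/ (forall x, B x -> I x))].

Definition nilpotent_elt (S : nzRingType) (b : S) : Prop :=
  exists n : nat, b ^+ n = 0.

Definition nilpotent_mod (S : nzRingType) (J : S -> Prop) (b : S) : Prop :=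
  exists n : nat, J (b ^+ n).

Definition minimal_non_nilpotent (S : nzRingType) (b : S) : Prop :=
  ~ nilpotent_elt b /\
  (forall J : S -> Prop, is_ideal J -> (exists x, J x /\ x <> 0) ->
     nilpotent_mod J b).

(* Main.v *)
Require Import Defs.
From HB Require Import structures.
From mathcomp Require Import all_boot all_order all_algebra.
From mathcomp Require Import boolp classical_sets.
Import GRing.Theory.
Local Open Scope ring_scope.

Section Aux.
Variables (R : nzRingType) (a : R).

Definition goodI (X : R -> Prop) := is_ideal X /\ forall n, ~ X (a ^+ n).

Lemma exists_max (ha : ~ nilpotent_elt a) :
  exists I, goodI I /\ forall J, is_ideal J -> (forall x, I x -> J x) ->
     ~ (forall x, J x -> I x) -> exists n, J (a ^+ n).
Proof.
pose P := fun X : set R => X = set0 \/ goodI X.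
have [I [PI Imax]] : exists A, P A /\ forall B, (A `<` B)%classic -> ~ P B.
  apply: Zorn_bigcup => F FP Ftot.
  have [E|NE] := pselect ((\bigcup_(X in F) X)%classic = set0).
    by left.
  right.
  have [xo [Xo FXo Xxo]] : exists x0, (\bigcup_(X in F) X)%classic x0.
    apply: contrapT => nE; apply: NE; apply/seteqP; split => x // Hx.
    by exfalso; apply: nE; exists x.
  have Fg : forall X, F X -> forall x, X x -> goodI X.
    move=> X FX x Xx; case: (FP X FX) => // E0; by rewrite E0 in Xx.
  have two : forall X Y x y, F X -> F Y -> X x -> Y y ->
      exists Z, [/\ F Z, Z x, Z y & goodI Z].
    move=> X Y x y FX FY Xx Yy; case: (Ftot X Y FX FY) => S.
      exists Y; split => //; [exact: S| exact: Fg Yy].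
    exists X; split => //; [exact: S| exact: Fg Xx].
  have [[H0 HD HN HL HR] Hd] := Fg _ FXo _ Xxo.
  split; first split.
  - by exists Xo.
  - move=> x y [X FX Xx] [Y FY Yy].
    have [Z [FZ Zx Zy [[_ ZD _ _ _] _]]] := two _ _ _ _ FX FY Xx Yy.
    by exists Z => //; apply: ZD.
  - move=> x [X FX Xx]; have [[_ _ XN _ _] _] := Fg _ FX _ Xx.
    by exists X => //; apply: XN.
  - move=> r x [X FX Xx]; have [[_ _ _ XL _] _] := Fg _ FX _ Xx.
    by exists X => //; apply: XL.
  - move=> r x [X FX Xx]; have [[_ _ _ _ XR] _] := Fg _ FX _ Xx.
    by exists X => //; apply: XR.
  - move=> n [X FX Xx]; have [_ Xd] := Fg _ FX _ Xx.
    exact: (Xd n).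
have gI : goodI I.
  case: PI => // I0; exfalso; apply: (Imax (fun x => x = 0)).
    split; first by rewrite I0.
    by move=> /(_ 0 erefl); rewrite I0.
  right; split; first split.
  - by [].
  - by move=> x y -> ->; rewrite addr0.
  - by move=> x ->; rewrite oppr0.
  - by move=> r x ->; rewrite mulr0.
  - by move=> r x ->; rewrite mul0r.
  - by move=> n H; apply: ha; exists n.
exists I; split => // J HJ IJ nJI.
apply: contrapT => nex; apply: (Imax J).
  by split.
by right; split => // n Jn; apply: nex; exists n.
Qed.

End Aux.

Theorem mainTheorem2 (R : nzRingType) (a : R) (ha : ~ nilpotent_elt a) :
  exists I : R -> Prop,
    prime_ideal I /\
    (forall (S : nzRingType) (f : {rmorphism R -> S}),
       (forall s : S, exists r : R, f r = s) ->
       (forall r : R, f r = 0 <-> I r) ->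
       minimal_non_nilpotent (f a)).
Proof.
have [I [[HI Id] Imax]] := @exists_max R a ha.
have [I0 ID IN IL IR] := HI.
have idl : forall C : R -> Prop, is_ideal C ->
    is_ideal (fun r => exists x i, [/\ C x, I i & r = x + i]).
  move=> C [C0 CD CN CL CR]; split.
  - by exists 0, 0; rewrite addr0.
  - move=> x y [x1 [i1 [Cx1 Ii1 ->]]] [y1 [j1 [Cy1 Ij1 ->]]].
    exists (x1 + y1), (i1 + j1); split; [exact: CD|exact: ID|].
    by rewrite addrACA.
  - move=> x [x1 [i1 [Cx1 Ii1 ->]]]; exists (- x1), (- i1).
    by split; [exact: CN|exact: IN|rewrite opprD].
  - move=> r x [x1 [i1 [Cx1 Ii1 ->]]]; exists (r * x1), (r * i1).
    by split; [exact: CL|exact: IL|rewrite mulrDr].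
  - move=> r x [x1 [i1 [Cx1 Ii1 ->]]]; exists (x1 * r), (i1 * r).
    by split; [exact: CR|exact: IR|rewrite mulrDl].
have sub : forall C : R -> Prop, is_ideal C -> forall r, I r ->
    exists x i, [/\ C x, I i & r = x + i].
  move=> C [C0 _ _ _ _] r Ir; exists 0, r; split => //; by rewrite add0r.
have gen : forall C : R -> Prop, is_ideal C -> forall x0, C x0 -> ~ I x0 ->
    exists m x i, [/\ C x, I i & a ^+ m = x + i].
  move=> C HC x0 Cx0 nIx0.
  apply: (Imax _ (idl C HC) (sub C HC)) => H; apply: nIx0.
  by apply: H; exists x0, 0; split => //; rewrite addr0.
exists I; split.
  split => //.
    by exists 1; rewrite -(expr0 a); apply: Id.
  move=> A B HA HB AB.
  apply: contrapT => /not_orP [nA nB].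
  have [x0 /not_implyP [Ax0 nIx0]] := (existsNP _).2 nA.
  have [y0 /not_implyP [By0 nIy0]] := (existsNP _).2 nB.
  have [m [x [i [Ax Ii Em]]]] := gen A HA x0 Ax0 nIx0.
  have [k [y [j [By Ij Ek]]]] := gen B HB y0 By0 nIy0.
  apply: (Id (m + k)%N); rewrite exprD Em Ek mulrDl !mulrDr.
  apply: (ID (x * y + x * j) (i * y + i * j)).
    apply: (ID (x * y) (x * j)); [exact: AB | exact: IL].
  apply: (ID (i * y) (i * j)); exact: IR.
move=> S f fsurj fker; split.
  move=> [n Hn]; apply: (Id n); apply/fker; by rewrite rmorphXn.
move=> J [J0 JD JN JL JR] [x [Jx xn0]].
have HJ' : is_ideal (fun r => J (f r)).
  split.
  - by rewrite rmorph0.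
  - by move=> u v Ju Jv; rewrite rmorphD; apply: JD.
  - by move=> u Ju; rewrite rmorphN; apply: JN.
  - by move=> r u Ju; rewrite rmorphM; apply: JL.
  - by move=> r u Ju; rewrite rmorphM; apply: JR.
have [r fr] := fsurj x.
have [n Hn] : exists n, J (f (a ^+ n)).
  apply: (Imax _ HJ').
    by move=> u /fker ->.
  move=> H; apply: xn0; rewrite -fr; apply/fker; apply: H; by rewrite fr.
by exists n; rewrite -rmorphXn.
Qed.
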